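(* In the setting described in the context, suppose $\mathrm{ev}$ is multiplicative and the functor $\mathcal{U}$ is strong symmetric monoidal (property (M)). Then: (1) for all objects $W,W'$ the composition map $\circ\colon\operatorname{Hom}_{\mathcal{P}^1}(\emptyset,W')\otimes\operatorname{Hom}_{\mathcal{P}^1}(W,\emptyset)\to\operatorname{Hom}_{\mathcal{P}^1}(W,W')$ is surjective (property (M')), $I_1(W,W')=I_2(W,W')$, and hence the quotient functor $\mathcal{P}^1\to\mathcal{P}^2$ is an isomorphism of $\Bbbk$-linear categories; (2) the ideal $I:=I_1=I_2$ is monoidal, i.e. $\Sigma\sqcup\Theta\in I(V\sqcup W,V'\sqcup W')$ whenever $\Sigma\in I(V,V')$ and $\Theta\in\operatorname{Hom}_{\mathcal{P}}(W,W')$, so the symmetric monoidal structure of $\mathcal{P}$ descends to $\mathcal{P}^1$, and the functor $\operatorname{Hom}_{\mathcal{P}^1}(\emptyset,-)\colon\mathcal{P}^1\to\Bbbk\text{-mod}$ is strong symmetric monoidal.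
   Context: Setting. Let $\Bbbk$ be a commutative ring. Let $\mathcal{P}$ be a small $\Bbbk$-linear (strict) symmetric monoidal category with monoidal product $\sqcup$ and unit object $\emptyset$, in which every object $W$ has a chosen dual $W^r$, giving the standard identifications $\operatorname{Hom}(W_1,W_2)\cong\operatorname{Hom}(\emptyset,W_2\sqcup W_1^r)\cong\operatorname{Hom}(W_1\sqcup W_2^r,\emptyset)\cong\operatorname{Hom}(W_2^r,W_1^r)$. (In the paper $\mathcal{P}$ is the category of closed $\mathcal{C}$-labeled webs and prefoams.) Let $\mathrm{tr}_W$ be the categorical trace and $\mathrm{ev}\colon\operatorname{End}_{\mathcal{P}}(\emptyset)\to\Bbbk$ a $\Bbbk$-linear map; it is multiplicative if $\mathrm{ev}(\mathrm{id}_\emptyset)=1$ and $\mathrm{ev}(\Sigma_1\sqcup\Sigma_2)=\mathrm{ev}(\Sigma_1)\mathrm{ev}(\Sigma_2)$. Define $I_1(W,W')\subseteq\operatorname{Hom}(W,W')$ as the set of $\Sigma$ with $\mathrm{ev}(\mathrm{tr}_W(\Sigma'\circ\Sigma))=0$ for all $\Sigma'\in\operatorname{Hom}(W',W)$, and $I_2(W,W')$ as the set of $\Sigma$ with $\mathrm{ev}(\Sigma''\circ\Sigma\circ\Sigma')=0$ for all $\Sigma'\in\operatorname{Hom}(\emptyset,W)$, $\Sigma''\in\operatorname{Hom}(W',\emptyset)$; these are ideals with $I_1\subseteq I_2$. Let $\pi\colon\mathcal{P}\to\mathcal{P}^1:=\mathcal{P}/I_1$, $\mathcal{P}^2:=\mathcal{P}/I_2$,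 and $\mathcal{U}:=\operatorname{Hom}_{\mathcal{P}^1}(\emptyset,-)\circ\pi\colon\mathcal{P}\to\Bbbk\text{-mod}$, which (for multiplicative $\mathrm{ev}$) is lax symmetric monoidal via the maps $\mathcal{U}(W)\otimes\mathcal{U}(V)\to\mathcal{U}(W\sqcup V)$ induced by $\sqcup$; strong means these maps and the unit map $\Bbbk\to\mathcal{U}(\emptyset)$ are isomorphisms. *)

(* Defs.v *)
From HB Require Import structures.
From mathcomp Require Import all_boot all_order all_algebra.
Set Implicit Arguments. Unset Strict Implicit. Unset Printing Implicit Defensive.
Import GRing.Theory.
Local Open Scope ring_scope.

(* Data of a small k-linear strict symmetric monoidal category with   *)
(* chosen (right) duals.  Strictness is encoded by Leibniz equalities  *)
(* of objects; morphisms are transported along them with [castH].     *)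
Record SMCData (R : comPzRingType) := {
  Ob : Type;
  unitO : Ob;
  tensO : Ob -> Ob -> Ob;
  dualO : Ob -> Ob;
  tensA : forall a b c, tensO (tensO a b) c = tensO a (tensO b c);
  tens1l : forall a, tensO unitO a = a;
  tens1r : forall a, tensO a unitO = a;
  Mor : Ob -> Ob -> lmodType R;
  comp : forall a b c, Mor b c -> Mor a b -> Mor a c;
  idm : forall a, Mor a a;
  tensH : forall a b c d, Mor a b -> Mor c d -> Mor (tensO a c) (tensO b d);
  braid : forall a b, Mor (tensO a b) (tensO b a);
  coev : forall a, Mor unitO (tensO a (dualO a));
  evm : forall a, Mor (tensO (dualO a) a) unitO
}.

Arguments Ob {R}.
Arguments unitO {R C} : rename.
Arguments tensO {R C} : rename.
Arguments dualO {R C} : rename.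
Arguments tensA {R C} : rename.
Arguments tens1l {R C} : rename.
Arguments tens1r {R C} : rename.
Arguments Mor {R C} : rename.
Arguments comp {R C a b c} : rename.
Arguments idm {R C} : rename.
Arguments tensH {R C a b c d} : rename.
Arguments braid {R C} : rename.
Arguments coev {R C} : rename.
Arguments evm {R C} : rename.

Section Defs.
Variables (R : comPzRingType) (C : SMCData R).
Implicit Types (a b c d e f : Ob C).

Definition castH (a a' b b' : Ob C) (e1 : a = a') (e2 : b = b') (f : Mor a b)
  : Mor a' b' :=
  match e1 in _ = x, e2 in _ = y return Mor x y with
  | erefl, erefl => f end.

Definition is_SMC : Prop :=
  (forall a b c d (h : Mor c d) (g : Mor b c) (f : Mor a b),
      comp h (comp g f) = comp (comp h g) f) /\
  (forall a b (f : Mor a b), comp (idm b) f = f) /\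
  (forall a b (f : Mor a b), comp f (idm a) = f) /\
  (forall a b c (k : R) (g g' : Mor b c) (f : Mor a b),
      comp (k *: g + g') f = k *: comp g f + comp g' f) /\
  (forall a b c (k : R) (g : Mor b c) (f f' : Mor a b),
      comp g (k *: f + f') = k *: comp g f + comp g f') /\
  (forall a b, tensH (idm a) (idm b) = idm (tensO a b)) /\
  (forall a b c a' b' c' (g : Mor b c) (f : Mor a b) (g' : Mor b' c') (f' : Mor a' b'),
      tensH (comp g f) (comp g' f') = comp (tensH g g') (tensH f f')) /\
  (forall a b c d (k : R) (f f' : Mor a b) (g : Mor c d),
      tensH (k *: f + f') g = k *: tensH f g + tensH f' g) /\
  (forall a b c d (k : R) (f : Mor a b) (g g' : Mor c d),
      tensH f (k *: g + g') = k *: tensH f g + tensH f g') /\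
  (forall a b c d e f (x : Mor a b) (y : Mor c d) (z : Mor e f),
      castH (tensA a c e) (tensA b d f) (tensH (tensH x y) z)
      = tensH x (tensH y z)) /\
  (forall a b (x : Mor a b), castH (tens1l a) (tens1l b) (tensH (idm unitO) x) = x) /\
  (forall a b (x : Mor a b), castH (tens1r a) (tens1r b) (tensH x (idm unitO)) = x) /\
  (forall a b c d (f : Mor a b) (g : Mor c d),
      comp (braid b d) (tensH f g) = comp (tensH g f) (braid a c)) /\
  (forall a b, comp (braid b a) (braid a b) = idm (tensO a b)) /\
  (forall a b c,
      braid a (tensO b c)
      = castH erefl (esym (tensA b c a))
          (comp (tensH (idm b) (braid a c))
                (castH (tensA a b c) (tensA b a c) (tensH (braid a b) (idm c))))) /\
  (forall a,
      castH (tens1l a) (tens1r a)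
        (comp (tensH (idm a) (evm a))
              (castH erefl (tensA a (dualO a) a) (tensH (coev a) (idm a))))
      = idm a) /\
  (forall a,
      castH (tens1r (dualO a)) (tens1l (dualO a))
        (comp (tensH (evm a) (idm (dualO a)))
              (castH erefl (esym (tensA (dualO a) a (dualO a)))
                     (tensH (idm (dualO a)) (coev a))))
      = idm (dualO a)).

Definition trace (W : Ob C) (f : Mor W W) : Mor unitO unitO :=
  comp (evm W) (comp (braid W (dualO W)) (comp (tensH f (idm (dualO W))) (coev W))).

Variable ev : Mor (@unitO R C) unitO -> R.

Definition ev_linear : Prop :=
  forall (k : R) (x y : Mor unitO unitO), ev (k *: x + y) = k * ev x + ev y.

Definition ev_multiplicative : Prop :=
  ev (idm unitO) = 1 /\
  forall s1 s2 : Mor unitO unitO,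
    ev (castH (tens1l unitO) (tens1l unitO) (tensH s1 s2)) = ev s1 * ev s2.

Definition I1 (W W' : Ob C) (S : Mor W W') : Prop :=
  forall S' : Mor W' W, ev (trace (comp S' S)) = 0.

Definition I2 (W W' : Ob C) (S : Mor W W') : Prop :=
  forall (S' : Mor unitO W) (S'' : Mor W' unitO), ev (comp S'' (comp S S')) = 0.

(* the lax structure map of U on representatives:
   [a] ⊗ [b] |-> [a ⊔ b]  (using ∅ ⊔ ∅ = ∅) *)
Definition laxU (W V : Ob C) (a : Mor unitO W) (b : Mor unitO V) : Mor unitO (tensO W V) :=
  castH (tens1l unitO) erefl (tensH a b).

(* μ_{W,V} : U(W) ⊗ U(V) -> U(W ⊔ V) is an isomorphism.  Since U(X) is
   Mor(∅,X)/I_1(∅,X), this says: (U(W⊔V), [a]⊗[b] |-> [a⊔b]) satisfies the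
   universal property of the tensor product U(W) ⊗_k U(V). *)
Definition laxU_iso (W V : Ob C) : Prop :=
  forall (M : lmodType R) (phi : Mor unitO W -> Mor unitO V -> M),
    (forall k x x' y, phi (k *: x + x') y = k *: phi x y + phi x' y) ->
    (forall k x y y', phi x (k *: y + y') = k *: phi x y + phi x y') ->
    (forall x y, I1 x -> phi x y = 0) ->
    (forall x y, I1 y -> phi x y = 0) ->
    exists psi : Mor unitO (tensO W V) -> M,
      [/\ (forall k z z', psi (k *: z + z') = k *: psi z + psi z'),
          (forall z, I1 z -> psi z = 0),
          (forall x y, psi (laxU x y) = phi x y) &
          (forall psi' : Mor unitO (tensO W V) -> M,
             (forall k z z', psi' (k *: z + z') = k *: psi' z + psi' z') ->
             (forall z, I1 z -> psi' z = 0) ->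
             (forall x y, psi' (laxU x y) = phi x y) ->
             forall z, psi' z = psi z)].

(* the unit map k -> U(∅), c |-> [c · id_∅], is an isomorphism *)
Definition unitU_iso : Prop :=
  (forall s : Mor unitO unitO, exists c : R, I1 (s - c *: idm unitO)) /\
  (forall c : R, I1 (c *: idm (@unitO R C)) -> c = 0).

Definition U_strong : Prop := unitU_iso /\ forall W V : Ob C, laxU_iso W V.

Definition propM' : Prop :=
  forall (W W' : Ob C) (S : Mor W W'),
    exists (n : nat) (a : 'I_n -> Mor unitO W') (b : 'I_n -> Mor W unitO),
      I1 (S - \sum_(i < n) comp (a i) (b i)).

End Defs.

(* Main.v *)
Require Import Defs.
From HB Require Import structures.
From mathcomp Require Import all_boot all_order all_algebra.
From Stdlib Require Import ProofIrrelevance ClassicalEpsilon FunctionalExtensionality PropExtensionality.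
Set Implicit Arguments. Unset Strict Implicit. Unset Printing Implicit Defensive.
Import GRing.Theory.
Local Open Scope ring_scope.

Record subm (R : comPzRingType) (V : lmodType R) := Subm {
  spr :> V -> Prop;
  spr0 : spr 0;
  sprlin : forall k x y, spr x -> spr y -> spr (k *: x + y) }.

Section Quot.
Variables (R : comPzRingType) (V : lmodType R) (P : subm V).

Lemma PD x y : P x -> P y -> P (x + y).
Proof. by move=> hx hy; have := sprlin 1 hx hy; rewrite scale1r. Qed.
Lemma PN x : P x -> P (- x).
Proof. by move=> hx; have := sprlin (-1) hx (spr0 P); rewrite addr0 scaleN1r. Qed.
Lemma PZ k x : P x -> P (k *: x).
Proof. by move=> hx; have := sprlin k hx (spr0 P); rewrite addr0. Qed.

Definition canon (x : V) : V := epsilon (inhabits 0) (fun y => P (y - x)).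
Lemma canonP x : P (canon x - x).
Proof. apply: (epsilon_spec (inhabits 0) (fun y => P (y - x))); exists x; rewrite subrr; exact: spr0. Qed.
Lemma canon_eq x y : P (x - y) -> canon x = canon y.
Proof.
move=> h; rewrite /canon; f_equal; apply: functional_extensionality => z.
apply: propositional_extensionality; split=> hz.
- have -> : z - y = (z - x) + (x - y) by rewrite addrA subrK.
  exact: PD.
- have -> : z - x = (z - y) + - (x - y) by rewrite opprB addrA subrK.
  exact/PD/PN.
Qed.
Lemma canon_id x : canon (canon x) = canon x.
Proof. exact/canon_eq/canonP. Qed.

Definition qT := {x : V | canon x == x}.
HB.instance Definition _ := Choice.on qT.
Definition cl (x : V) : qT := exist _ (canon x) (introT eqP (canon_id x)).
Lemma cl_val (a : qT) : cl (val a) = a.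
Proof. apply: val_inj => /=; exact/eqP/(valP a). Qed.
Lemma cl_eq x y : P (x - y) -> cl x = cl y.
Proof. by move=> h; apply: val_inj => /=; apply: canon_eq. Qed.
Lemma cl_eqP x y : cl x = cl y -> P (x - y).
Proof.
move=> /(congr1 val) /= e.
have h1 := canonP x; have h2 := canonP y; rewrite e in h1.
have -> : x - y = - (canon y - x) + (canon y - y) by rewrite opprB addrA subrK.
exact/PD/h2/PN.
Qed.
Lemma val_cl x : P (val (cl x) - x).
Proof. exact: canonP. Qed.

Definition qadd (a b : qT) := cl (val a + val b).
Definition qopp (a : qT) := cl (- val a).
Definition q0 := cl 0.
Definition qscale k (a : qT) := cl (k *: val a).

Lemma clD x y : cl (val (cl x) + y) = cl (x + y).
Proof. apply: cl_eq; rewrite opprD addrACA subrr addr0; exact: val_cl. Qed.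
Lemma clN x : cl (- val (cl x)) = cl (- x).
Proof. apply: cl_eq; rewrite -opprD; exact/PN/val_cl. Qed.
Lemma clZ k x : cl (k *: val (cl x)) = cl (k *: x).
Proof. apply: cl_eq; rewrite -scalerBr; exact/PZ/val_cl. Qed.
Lemma clDr x y : cl (y + val (cl x)) = cl (y + x).
Proof. by rewrite addrC clD addrC. Qed.

Lemma qaddA : associative qadd.
Proof. by move=> a b c; rewrite /qadd clD clDr addrA. Qed.
Lemma qaddC : commutative qadd.
Proof. by move=> a b; rewrite /qadd addrC. Qed.
Lemma qadd0 : left_id q0 qadd.
Proof. by move=> a; rewrite /qadd /q0 clD add0r cl_val. Qed.
Lemma qaddN : left_inverse q0 qopp qadd.
Proof. by move=> a; rewrite /qadd /qopp clD addNr. Qed.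

HB.instance Definition _ := GRing.isZmodule.Build qT qaddA qaddC qadd0 qaddN.

Lemma qscaleA a b v : qscale a (qscale b v) = qscale (a * b) v.
Proof. by rewrite /qscale clZ scalerA. Qed.
Lemma qscale1 : left_id 1 qscale.
Proof. by move=> v; rewrite /qscale scale1r cl_val. Qed.
Lemma qscaleDr : right_distributive qscale +%R.
Proof. move=> a u v; change (qscale a (qadd u v) = qadd (qscale a u) (qscale a v)). by rewrite /qscale /qadd clZ clD clDr scalerDr. Qed.
Lemma qscaleDl v : {morph qscale^~ v: a b / a + b}.
Proof. move=> a b; change (qscale (a + b) v = qadd (qscale a v) (qscale b v)). by rewrite /qscale /qadd clD clDr scalerDl. Qed.

HB.instance Definition _ := GRing.Zmodule_isLmodule.Build R qT qscaleA qscale1 qscaleDr qscaleDl.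

Lemma cl_lin k x y : cl (k *: x + y) = k *: cl x + cl y.
Proof. have -> : k *: cl x + cl y = qadd (qscale k (cl x)) (cl y) by []. rewrite /qadd /qscale clD clDr; apply: cl_eq.
rewrite opprD addrACA subrr addr0 -scalerBr -opprB; exact/PZ/PN/val_cl. Qed.
Lemma cl0E x : cl x = 0 -> P x.
Proof. by move=> h; have := cl_eqP h; rewrite subr0. Qed.
Lemma cl0 x : P x -> cl x = 0.
Proof. by move=> h; apply: cl_eq; rewrite subr0. Qed.
End Quot.


Notation "g ⊙ f" := (Defs.comp g f) (at level 60, right associativity).
Notation "f ⊗ g" := (tensH f g) (at level 40, left associativity).

Section Cat.
Variables (R : comPzRingType) (C : SMCData R).
Hypothesis HC : is_SMC C.
Implicit Types (a b c d : Ob C).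
Notation "∅" := (@unitO R C).

Lemma cA a b c d (h : Mor c d) (g : Mor b c) (f : Mor a b) : (h ⊙ g) ⊙ f = h ⊙ g ⊙ f.
Proof. by case: HC => H _; rewrite H. Qed.
Lemma c1l a b (f : Mor a b) : idm b ⊙ f = f.
Proof. by case: HC => _ [H _]; rewrite H. Qed.
Lemma c1r a b (f : Mor a b) : f ⊙ idm a = f.
Proof. by case: HC => _ [_ [H _]]; rewrite H. Qed.
Lemma clinl a b c (k : R) (g g' : Mor b c) (f : Mor a b) : (k *: g + g') ⊙ f = k *: (g ⊙ f) + (g' ⊙ f).
Proof. by case: HC => _ [_ [_ [H _]]]; rewrite H. Qed.
Lemma clinr a b c (k : R) (g : Mor b c) (f f' : Mor a b) : g ⊙ (k *: f + f') = k *: (g ⊙ f) + (g ⊙ f').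
Proof. by case: HC => _ [_ [_ [_ [H _]]]]; rewrite H. Qed.
Lemma tid a b : tensH (idm a) (idm b) = idm (tensO a b).
Proof. by case: HC => _ [_ [_ [_ [_ [H _]]]]]; rewrite H. Qed.
Lemma tcomp a b c a' b' c' (g : Mor b c) (f : Mor a b) (g' : Mor b' c') (f' : Mor a' b') :
  tensH (g ⊙ f) (g' ⊙ f') = tensH g g' ⊙ tensH f f'.
Proof. by case: HC => _ [_ [_ [_ [_ [_ [H _]]]]]]; rewrite H. Qed.
Lemma tlinl a b c d (k : R) (f f' : Mor a b) (g : Mor c d) : tensH (k *: f + f') g = k *: tensH f g + tensH f' g.
Proof. by case: HC => _ [_ [_ [_ [_ [_ [_ [H _]]]]]]]; rewrite H. Qed.
Lemma tlinr a b c d (k : R) (f : Mor a b) (g g' : Mor c d) : tensH f (k *: g + g') = k *: tensH f g + tensH f g'.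
Proof. by case: HC => _ [_ [_ [_ [_ [_ [_ [_ [H _]]]]]]]]; rewrite H. Qed.
Lemma tassoc0 a b c d e f (x : Mor a b) (y : Mor c d) (z : Mor e f) :
      castH (tensA a c e) (tensA b d f) (tensH (tensH x y) z) = tensH x (tensH y z).
Proof. by case: HC => _ [_ [_ [_ [_ [_ [_ [_ [_ [H _]]]]]]]]]; rewrite H. Qed.
Lemma tul0 a b (x : Mor a b) : castH (tens1l a) (tens1l b) (tensH (idm ∅) x) = x.
Proof. by case: HC => _ [_ [_ [_ [_ [_ [_ [_ [_ [_ [H _]]]]]]]]]]; rewrite H. Qed.
Lemma tur0 a b (x : Mor a b) : castH (tens1r a) (tens1r b) (tensH x (idm ∅)) = x.
Proof. by case: HC => _ [_ [_ [_ [_ [_ [_ [_ [_ [_ [_ [H _]]]]]]]]]]]; rewrite H. Qed.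
Lemma bnat a b c d (f : Mor a b) (g : Mor c d) : braid b d ⊙ tensH f g = tensH g f ⊙ braid a c.
Proof. by case: HC => _ [_ [_ [_ [_ [_ [_ [_ [_ [_ [_ [_ [H _]]]]]]]]]]]]; rewrite H. Qed.
Lemma binv a b : braid b a ⊙ braid a b = idm (tensO a b).
Proof. by case: HC => _ [_ [_ [_ [_ [_ [_ [_ [_ [_ [_ [_ [_ [H _]]]]]]]]]]]]]; rewrite H. Qed.
Lemma bhex a b c : braid a (tensO b c)
      = castH erefl (esym (tensA b c a))
          (Defs.comp (tensH (idm b) (braid a c))
                (castH (tensA a b c) (tensA b a c) (tensH (braid a b) (idm c)))).
Proof. by case: HC => _ [_ [_ [_ [_ [_ [_ [_ [_ [_ [_ [_ [_ [_ [H _]]]]]]]]]]]]]]; rewrite H. Qed.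
Lemma zz1 a : castH (tens1l a) (tens1r a)
        (Defs.comp (tensH (idm a) (evm a))
              (castH erefl (tensA a (dualO a) a) (tensH (coev a) (idm a))))
      = idm a.
Proof. by case: HC => _ [_ [_ [_ [_ [_ [_ [_ [_ [_ [_ [_ [_ [_ [_ [H _]]]]]]]]]]]]]]]; rewrite H. Qed.

Definition io a b (e : a = b) : Mor a b := castH erefl e (idm a).
Lemma castE a a' b b' (e1 : a = a') (e2 : b = b') (f : Mor a b) :
  castH e1 e2 f = io e2 ⊙ f ⊙ io (esym e1).
Proof. by destruct e1, e2; rewrite /io /= c1l c1r. Qed.
Lemma io_irr a b (e e' : a = b) : io e = io e'.
Proof. by rewrite (proof_irrelevance _ e e'). Qed.
Lemma io_id a (e : a = a) : io e = idm a.
Proof. by rewrite (proof_irrelevance _ e erefl). Qed.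
Lemma io_io a b c (e1 : a = b) (e2 : b = c) : io e2 ⊙ io e1 = io (etrans e1 e2).
Proof. by destruct e1, e2; rewrite /io /= c1l. Qed.
Lemma io_ioA a b c d (e1 : a = b) (e2 : b = c) (f : Mor d a) : io e2 ⊙ io e1 ⊙ f = io (etrans e1 e2) ⊙ f.
Proof. by rewrite -cA io_io. Qed.
Lemma io_tens a b c d (e1 : a = b) (e2 : c = d) (e : tensO a c = tensO b d) : tensH (io e1) (io e2) = io e.
Proof. by destruct e1, e2; rewrite !io_id tid. Qed.
Lemma tid1 a b : tensH (idm a) (idm b) = io (erefl (tensO a b)).
Proof. by rewrite tid. Qed.

Ltac ionorm := repeat progress rewrite ?cA ?io_ioA ?io_io ?io_id ?c1l ?c1r.
Ltac ionormH H := repeat progress rewrite ?cA ?io_ioA ?io_io ?io_id ?c1l ?c1r in H.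
Ltac iorefl := repeat f_equal; apply: proof_irrelevance.

Lemma tA a b c d e f (x : Mor a b) (y : Mor c d) (z : Mor e f) :
  io (tensA b d f) ⊙ tensH (tensH x y) z = tensH x (tensH y z) ⊙ io (tensA a c e).
Proof. by rewrite -tassoc0 castE !cA io_io io_id c1r. Qed.
Lemma tA' a b c d e f (x : Mor a b) (y : Mor c d) (z : Mor e f) :
  tensH (tensH x y) z = io (esym (tensA b d f)) ⊙ tensH x (tensH y z) ⊙ io (tensA a c e).
Proof. by rewrite -tA io_ioA io_id c1l. Qed.
Lemma tul a b (x : Mor a b) : tensH (idm ∅) x = io (esym (tens1l b)) ⊙ x ⊙ io (tens1l a).
Proof. by rewrite -{2}(tul0 x) castE; ionorm. Qed.
Lemma tur a b (x : Mor a b) : tensH x (idm ∅) = io (esym (tens1r b)) ⊙ x ⊙ io (tens1r a).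
Proof. by rewrite -{2}(tur0 x) castE; ionorm. Qed.


Lemma io_canc x y z w (f g : Mor x y) (e1 e3 : y = z) (e2 e4 : w = x) :
  io e1 ⊙ f ⊙ io e2 = io e3 ⊙ g ⊙ io e4 -> f = g.
Proof.
rewrite (io_irr e3 e1) (io_irr e4 e2) => H.
have := congr1 (fun h => io (esym e1) ⊙ h ⊙ io (esym e2)) H => /=.
by ionorm.
Qed.
Lemma io_canc1 x z (f : Mor x x) (e1 : x = z) (e2 : z = x) :
  io e1 ⊙ f ⊙ io e2 = idm z -> f = idm x.
Proof. move=> H; apply: (@io_canc _ _ _ _ _ _ e1 e1 e2 e2); by rewrite H c1l io_io io_id. Qed.
Lemma io_cancl x y z (f g : Mor x y) (e1 e3 : y = z) :
  io e1 ⊙ f = io e3 ⊙ g -> f = g.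
Proof. move=> H; apply: (@io_canc _ _ _ _ _ _ e1 e3 erefl erefl); by rewrite -!cA H. Qed.
Lemma io_cancr x y w (f g : Mor x y) (e2 e4 : w = x) :
  f ⊙ io e2 = g ⊙ io e4 -> f = g.
Proof. move=> H; apply: (@io_canc _ _ _ _ _ _ erefl erefl e2 e4); by rewrite !io_id !c1l H. Qed.

Lemma btrans a u v (e : u = v) :
  braid a u = io (f_equal (fun y => tensO y a) (esym e)) ⊙ braid a v ⊙ io (f_equal (tensO a) e).
Proof. by destruct e; rewrite !io_id c1l c1r. Qed.

Lemma betaUr a : braid a ∅ = io (etrans (tens1r a) (esym (tens1l a))).
Proof.
have [t eb] : {t : Mor a a | braid a ∅ = io (esym (tens1l a)) ⊙ t ⊙ io (tens1r a)}.
  by exists (io (tens1l a) ⊙ braid a ∅ ⊙ io (esym (tens1r a))); ionorm.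
have hex := bhex a ∅ ∅.
rewrite !castE tul tur (btrans a (tens1l ∅)) eb in hex.
ionormH hex.
have tt : t = t ⊙ t.
  rewrite -[t ⊙ t ⊙ _]cA in hex; exact: (io_canc hex).
have hi := binv a ∅.
have [t' eb'] : {t' : Mor a a | braid ∅ a = io (esym (tens1r a)) ⊙ t' ⊙ io (tens1l a)}.
  by exists (io (tens1r a) ⊙ braid ∅ a ⊙ io (esym (tens1l a))); ionorm.
rewrite eb' eb in hi; ionormH hi.
have ti : t' ⊙ t = idm a.
  rewrite -[t' ⊙ t ⊙ _]cA in hi; exact: io_canc1 hi.
have t1 : t = idm a by rewrite -ti {2}tt -cA ti c1l.
rewrite eb t1; ionorm; exact: io_irr.
Qed.

Lemma betaUl a : braid ∅ a = io (etrans (tens1l a) (esym (tens1r a))).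
Proof.
have hi := binv a ∅; rewrite betaUr in hi.
apply: (@io_cancr _ _ _ _ _ (etrans (tens1r a) (esym (tens1l a))) (etrans (tens1r a) (esym (tens1l a)))).
by rewrite hi; ionorm.
Qed.


Lemma tcK a b c a' b' c' e (g : Mor b c) (f : Mor a b) (g' : Mor b' c') (f' : Mor a' b') (r : Mor e (tensO a a')) :
  (g ⊗ g') ⊙ (f ⊗ f') ⊙ r = ((g ⊙ f) ⊗ (g' ⊙ f')) ⊙ r.
Proof. by rewrite tcomp cA. Qed.
Lemma turK a b e (x : Mor a b) (r : Mor e (tensO a ∅)) :
  x ⊙ io (tens1r a) ⊙ r = io (tens1r b) ⊙ (x ⊗ idm ∅) ⊙ r.
Proof. by rewrite tur; ionorm. Qed.
Lemma tulK a b e (x : Mor a b) (r : Mor e a) :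
  io (esym (tens1l b)) ⊙ x ⊙ r = (idm ∅ ⊗ x) ⊙ io (esym (tens1l a)) ⊙ r.
Proof. by rewrite tul; ionorm. Qed.
Lemma tAK a b c d e f g (x : Mor a b) (y : Mor c d) (z : Mor e f) (r : Mor g (tensO (tensO a c) e)) :
  io (tensA b d f) ⊙ (x ⊗ y ⊗ z) ⊙ r = (x ⊗ (y ⊗ z)) ⊙ io (tensA a c e) ⊙ r.
Proof. by rewrite -cA tA cA. Qed.
Lemma tensCl a b c d (g : Mor b c) (f : Mor a b) : (g ⊙ f) ⊗ idm d = (g ⊗ idm d) ⊙ (f ⊗ idm d).
Proof. by rewrite -{1}(c1l (idm d)) tcomp. Qed.

Lemma tfl a b c d (f : Mor a b) (g : Mor c d) : f ⊗ g = (idm b ⊗ g) ⊙ (f ⊗ idm c).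
Proof. by rewrite -tcomp c1l c1r. Qed.
Lemma tfr a b c d (f : Mor a b) (g : Mor c d) : f ⊗ g = (f ⊗ idm d) ⊙ (idm a ⊗ g).
Proof. by rewrite -tcomp c1l c1r. Qed.
Lemma tul' a b (x : Mor a b) : io (esym (tens1l b)) ⊙ x = (idm ∅ ⊗ x) ⊙ io (esym (tens1l a)).
Proof. by rewrite tul; ionorm. Qed.

Lemma L1 W (x : Mor ∅ W) (g : Mor W ∅) : trace (x ⊙ g) = g ⊙ x.
Proof.
rewrite /trace tensCl; ionorm.
rewrite -[braid _ _ ⊙ (x ⊗ _) ⊙ _]cA bnat betaUl; ionorm.
rewrite -{2}(c1l x) -(zz1 W) !castE; ionorm.
rewrite turK tcK c1l c1r.
rewrite [io (etrans (esym (tens1l W)) _)](io_irr _ (esym (tens1l W))) tul' tcK c1l c1r.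
rewrite (tfl (coev W) x) -[idm (tensO W (dualO W))]tid cA tAK tcK c1r.
rewrite [in X in _ = X](tfl g) [in X in _ = X]tul; ionorm.
rewrite -[idm (tensO (dualO W) ∅)]tid -tAK [in X in _ = X]tcK c1l [in X in _ = X]tur; ionorm.
iorefl.
Qed.

Lemma T0 (s : Mor ∅ ∅) : trace s = s.
Proof. by rewrite -{1}(c1l s) L1 c1r. Qed.


Lemma Klem X V W (u : Mor ∅ X) (A : Mor (tensO X V) W) (B : Mor W (tensO ∅ V)) :
  exists Y : Mor X ∅, trace (A ⊙ (u ⊗ idm V) ⊙ B) = Y ⊙ u.
Proof.
rewrite /trace !tensCl; ionorm.
rewrite (tA' u) tid; ionorm.
set q := io (tensA ∅ V (dualO W)) ⊙ (B ⊗ idm (dualO W)) ⊙ coev W.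
have -> : q = io (esym (tens1l _)) ⊙ (io (tens1l _) ⊙ q) by rewrite io_ioA io_id c1l.
rewrite tul' tcK c1r c1l (tfl u) tur; ionorm.
rewrite -!cA; by eexists.
Qed.


Definition Phi W W' (u : Mor ∅ (tensO W' (dualO W))) : Mor W W' :=
  io (tens1r W') ⊙ (idm W' ⊗ evm W) ⊙ io (tensA W' (dualO W) W) ⊙ (u ⊗ idm W) ⊙ io (esym (tens1l W)).

Lemma PhiNat W X W' (g : Mor X W') (v : Mor ∅ (tensO X (dualO W))) :
  Phi ((g ⊗ idm (dualO W)) ⊙ v) = g ⊙ Phi v.
Proof.
rewrite /Phi tensCl; ionorm.
by rewrite tAK tid tcK c1l c1r tfr cA turK; ionorm.
Qed.

Lemma PhiCoev W : Phi (coev W) = idm W.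
Proof.
rewrite -[RHS](zz1 W) !castE /Phi; ionorm; iorefl.
Qed.

Lemma Phi_lin W W' k (u u' : Mor ∅ (tensO W' (dualO W))) :
  Phi (k *: u + u') = k *: Phi u + Phi u'.
Proof. by rewrite /Phi tlinl !clinl !clinr. Qed.


Section LinF.
Variables (U V : lmodType R) (F : U -> V).
Hypothesis HF : forall k x y, F (k *: x + y) = k *: F x + F y.
Lemma F0 : F 0 = 0.
Proof. have h := HF 1 0 0; rewrite scaler0 addr0 scale1r in h. by apply: (addrI (F 0)); rewrite -h addr0. Qed.
Lemma FD x y : F (x + y) = F x + F y.
Proof. by have := HF 1 x y; rewrite !scale1r. Qed.
Lemma FZ k x : F (k *: x) = k *: F x.
Proof. by have := HF k x 0; rewrite !addr0 F0 addr0. Qed.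
Lemma FN x : F (- x) = - F x.
Proof. by rewrite -scaleN1r FZ scaleN1r. Qed.
Lemma FB x y : F (x - y) = F x - F y.
Proof. by rewrite FD FN. Qed.
Lemma Fsum (I : Type) (s : seq I) (G : I -> U) : F (\sum_(i <- s) G i) = \sum_(i <- s) F (G i).
Proof. elim: s => [|i s IH]; first by rewrite !big_nil F0. by rewrite !big_cons FD IH. Qed.
End LinF.

Lemma tr_lin W k (f g : Mor W W) : @trace R C W (k *: f + g) = k *: trace f + trace g.
Proof. by rewrite /trace tlinl !clinl !clinr. Qed.

Section Ev.
Variable (ev : Mor (@unitO R C) unitO -> R).
Hypothesis Hlin : ev_linear ev.
Hypothesis HM : U_strong ev.

Lemma ev0 : ev 0 = 0.
Proof. have h := Hlin 1 0 0; rewrite scaler0 addr0 mul1r in h. by apply: (addrI (ev 0)); rewrite -h addr0. Qed.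
Lemma evD x y : ev (x + y) = ev x + ev y.
Proof. by have := Hlin 1 x y; rewrite scale1r mul1r. Qed.
Lemma evsum (I : Type) (s : seq I) (G : I -> Mor ∅ ∅) : ev (\sum_(i <- s) G i) = \sum_(i <- s) ev (G i).
Proof. elim: s => [|i s IH]; first by rewrite !big_nil ev0. by rewrite !big_cons evD IH. Qed.
Lemma evsum0 (I : Type) (s : seq I) (G : I -> Mor ∅ ∅) : (forall i, ev (G i) = 0) -> ev (\sum_(i <- s) G i) = 0.
Proof. by move=> h; rewrite evsum big1. Qed.

Lemma I1_lin W W' k (a b : Mor W W') : I1 ev a -> I1 ev b -> I1 ev (k *: a + b).
Proof. by move=> ha hb S'; rewrite clinr tr_lin Hlin ha hb mulr0 addr0. Qed.
Lemma I1_0 W W' : I1 ev (0 : Mor W W').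
Proof. by move=> S'; rewrite (F0 (fun k x y => clinr k S' x y)) (F0 (fun k x y => @tr_lin W k x y)) ev0. Qed.

Definition Nn X (u : Mor ∅ X) := forall Y : Mor X ∅, ev (Y ⊙ u) = 0.
Lemma I1N X (u : Mor ∅ X) : I1 ev u -> Nn u.
Proof. by move=> h Y; rewrite -(T0 (Y ⊙ u)); apply: h. Qed.

Lemma KI1 X V W W' (u : Mor ∅ X) (A : Mor (tensO X V) W') (B : Mor W (tensO ∅ V)) :
  Nn u -> I1 ev (A ⊙ (u ⊗ idm V) ⊙ B).
Proof. move=> h S'; rewrite -[S' ⊙ A ⊙ _]cA; have [Y ->] := Klem u (S' ⊙ A) B; exact: h. Qed.


Lemma laxU_linl X Y k (x x' : Mor ∅ X) (y : Mor ∅ Y) : laxU (k *: x + x') y = k *: laxU x y + laxU x' y.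
Proof. by rewrite /laxU !castE tlinl clinl clinr. Qed.
Lemma laxUZ X Y k (x : Mor ∅ X) (y : Mor ∅ Y) : laxU (k *: x) y = k *: laxU x y.
Proof. exact: (FZ (fun k x x' => laxU_linl k x x' y)). Qed.

Lemma SURJ X Y (z : Mor ∅ (tensO X Y)) :
  exists s : seq (Mor ∅ X * Mor ∅ Y), I1 ev (z - \sum_(p <- s) laxU p.1 p.2).
Proof.
pose Q := fun z : Mor ∅ (tensO X Y) => exists s : seq (Mor ∅ X * Mor ∅ Y), I1 ev (z - \sum_(p <- s) laxU p.1 p.2).
have Q0 : Q 0 by exists [::]; rewrite big_nil subr0; exact: I1_0.
have Qlin : forall k x y, Q x -> Q y -> Q (k *: x + y).
  move=> k x y [s hs] [s' hs']; exists ([seq (k *: p.1, p.2) | p <- s] ++ s').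
  rewrite big_cat big_map /=.
  have -> : \sum_(p <- s) laxU (k *: p.1) p.2 = k *: \sum_(p <- s) laxU p.1 p.2.
    by rewrite scaler_sumr; apply: eq_bigr => p _; rewrite laxUZ.
  have -> : k *: x + y - (k *: \sum_(p <- s) laxU p.1 p.2 + \sum_(p <- s') laxU p.1 p.2)
     = k *: (x - \sum_(p <- s) laxU p.1 p.2) + (y - \sum_(p <- s') laxU p.1 p.2).
    by rewrite scalerBr opprD addrACA.
  exact: I1_lin.
pose P := Subm Q0 Qlin.
have [_ Hiso] := HM.
have [|||| psi [_ _ _ psiu]] := Hiso X Y (qT P) (fun _ _ => 0).
- by move=> *; rewrite scaler0 addr0.
- by move=> *; rewrite scaler0 addr0.
- by [].
- by [].
have h1 : forall w, @cl _ _ P w = psi w.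
  apply: psiu; first exact: (@cl_lin _ _ P).
  - by move=> w hw; apply: cl0; exists [::]; rewrite big_nil subr0.
  - by move=> x y; apply: cl0; exists [:: (x, y)]; rewrite big_cons big_nil addr0 subrr; exact: I1_0.
have h2 : forall w, 0 = psi w.
  by apply: psiu => // *; rewrite scaler0 addr0.
suff : @cl _ _ P z = 0 by move/cl0E.
by rewrite h1 -h2.
Qed.

Lemma PhiL W W' (a : Mor ∅ W') (c : Mor ∅ (dualO W)) :
  Phi (laxU a c) = a ⊙ Phi (laxU (idm ∅) c).
Proof. rewrite -PhiNat; congr Phi; rewrite /laxU !castE; ionorm. by rewrite tcK c1r c1l. Qed.

Lemma PM W W' (S : Mor W W') : exists (s : seq (Mor ∅ W' * Mor W ∅)) (u : Mor ∅ (tensO W' (dualO W))),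
  Nn u /\ S = \sum_(p <- s) (p.1 ⊙ p.2) + Phi u.
Proof.
have [s0 hs] := SURJ ((S ⊗ idm (dualO W)) ⊙ coev W).
exists ([seq (p.1, Phi (laxU (idm ∅) p.2)) | p <- s0]), (((S ⊗ idm _) ⊙ coev W) - \sum_(p <- s0) laxU p.1 p.2).
split; first exact: I1N.
have HL := fun k x y => @Phi_lin W W' k x y.
rewrite (FB HL) (Fsum HL) PhiNat PhiCoev c1r big_map /=.
under [X in _ = _ + (_ - X)]eq_bigr do rewrite PhiL.
by rewrite addrC subrK.
Qed.

Lemma propM_ok : propM' ev.
Proof.
move=> W W' S; have [s [u [hu ->]]] := PM S.
pose x0 := (0 : Mor ∅ W', 0 : Mor W ∅).
exists (size s), (fun i => (nth x0 s i).1), (fun i => (nth x0 s i).2).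
have -> : \sum_(i < size s) ((nth x0 s i).1 ⊙ (nth x0 s i).2) = \sum_(p <- s) (p.1 ⊙ p.2).
  by rewrite (big_nth x0) big_mkord.
rewrite [X in I1 _ X](_ : _ = Phi u); last by rewrite addrC addKr.
have -> : Phi u = (io (tens1r W') ⊙ (idm W' ⊗ evm W) ⊙ io (tensA W' (dualO W) W)) ⊙ (u ⊗ idm W) ⊙ io (esym (tens1l W)).
  by rewrite /Phi; ionorm.
exact: KI1.
Qed.

Lemma I12 W W' (S : Mor W W') : I1 ev S -> I2 ev S.
Proof. by move=> h S' S''; have := h (S' ⊙ S''); rewrite cA L1 cA. Qed.

Lemma I21 W W' (S : Mor W W') : I2 ev S -> I1 ev S.
Proof.
move=> h S'; have [s [u [hu ->]]] := PM S'.
have HF := fun k (x y : Mor W' W) => clinl k x y S.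
have HT := fun k x y => @tr_lin W k x y.
rewrite (FD HF) (FD HT) evD (Fsum HF) (Fsum HT) evsum0 ?add0r.
  have -> : Phi u ⊙ S = (io (tens1r W) ⊙ (idm W ⊗ evm W') ⊙ io (tensA W (dualO W') W')) ⊙ (u ⊗ idm W') ⊙ (io (esym (tens1l W')) ⊙ S).
    by rewrite /Phi; ionorm.
  by have := KI1 (io (tens1r W) ⊙ (idm W ⊗ evm W') ⊙ io (tensA W (dualO W') W')) (io (esym (tens1l W')) ⊙ S) hu (idm W); rewrite c1l.
by move=> p; rewrite cA L1 cA; apply: h.
Qed.

Lemma KE X V (u : Mor ∅ X) (A : Mor (tensO X V) ∅) (B : Mor ∅ (tensO ∅ V)) :
  exists Y, A ⊙ (u ⊗ idm V) ⊙ B = Y ⊙ u.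
Proof. by have [Y hY] := Klem u A B; exists Y; rewrite -hY T0. Qed.

Lemma mono V V' W W' (S : Mor V V') (T : Mor W W') : I1 ev S -> I1 ev (S ⊗ T).
Proof.
move=> /I12 h; apply: I21 => x y.
have [s hs] := SURJ x.
have -> : x = (x - \sum_(p <- s) laxU p.1 p.2) + \sum_(p <- s) laxU p.1 p.2 by rewrite subrK.
have H1 := fun k (a b : Mor ∅ (tensO V W)) => clinr k (S ⊗ T) a b.
have H2 := fun k (a b : Mor ∅ (tensO V' W')) => clinr k y a b.
rewrite (FD H1) (FD H2) evD (Fsum H1) (Fsum H2) evsum0 ?addr0.
  by rewrite -cA; apply: I1N.
move=> p; rewrite /laxU castE; ionorm; rewrite tcK tfr cA.
by case: (KE (S ⊙ p.1) y (idm ∅ ⊗ (T ⊙ p.2) ⊙ io (esym (tens1l ∅)))) => Y ->; apply: h.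
Qed.

End Ev.

End Cat.

Theorem mainTheorem5 (R : comPzRingType) (C : SMCData R)
  (HC : is_SMC C) (ev : Mor (@unitO R C) unitO -> R)
  (Hlin : ev_linear ev) (Hmult : ev_multiplicative ev)
  (HM : U_strong ev) :
  (* (1) *)
  propM' ev /\
  (forall (W W' : Ob C) (S : Mor W W'), I1 ev S <-> I2 ev S) /\
  (* (2) *)
  (forall (V V' W W' : Ob C) (S : Mor V V') (T : Mor W W'),
      I1 ev S -> I1 ev (tensH S T)) /\
  U_strong ev.
Proof.
split; first exact: (propM_ok HC Hlin HM).
split.
  move=> W W' S; split; first exact: (I12 HC).
  exact: (I21 HC Hlin HM).
split; last exact: HM.
move=> V V' W W' S T; exact: (mono HC Hlin HM).
Qed.
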